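(* Let $G$ be a circle of circumference $1$, let $\mathbf{x}\in G^n$ be such that the agents are not on one semicircle, and let $i\in N$, $x_i'\in G$ be such that the agents in $\mathbf{x}'=(x_i',\mathbf{x}_{-i})$ are not on one semicircle. Then $\mathrm{cost}(\mathrm{rc}(\mathbf{x}),x_i)\le\mathrm{cost}(\mathrm{rc}(\mathbf{x}'),x_i)$.
   Context: $d(x,y)$ is the shorter-arc length; $\hat x$ the antipode of $x$; $\mathrm{cost}(P,x_i)=\mathbb{E}_{y\sim P}[d(x_i,y)]$. Agents are on one semicircle if all locations lie in some closed arc of length $1/2$. RC: the antipodal points $\hat{x}_1,\dots,\hat{x}_n$ partition $G$ into arcs between cyclically consecutive antipodal points; $\mathrm{rc}$ returns the midpoint of each such arc with probability equal to its length. *)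

(* Defs.v *)
From Stdlib Require Import Reals Lra List Sorted Permutation.
Import ListNotations.
Open Scope R_scope.

(* The circle G of circumference 1 is R / Z; a point is represented by any
   real number, taken modulo 1. *)

Definition circ_dist (x y : R) : R :=
  let t := frac_part (x - y) in Rmin t (1 - t).

Definition antipode (x : R) : R := frac_part (x + / 2).

(* Agents 0..n-1 lie on one semicircle: all locations in some closed arc of
   length 1/2, i.e. the arc [a, a+1/2] (mod 1). *)
Definition on_one_semicircle (n : nat) (x : nat -> R) : Prop :=
  exists a : R, forall j, (j < n)%nat -> frac_part (x j - a) <= / 2.

Definition update (x : nat -> R) (i : nat) (v : R) : nat -> R :=
  fun j => if Nat.eqb j i then v else x j.

Definition antipodes (n : nat) (x : nat -> R) : list R :=
  map (fun j => antipode (x j)) (seq 0 n).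

Fixpoint consec (l : list R) : list (R * R) :=
  match l with
  | a :: ((b :: _) as t) => (a, b) :: consec t
  | _ => []
  end.

(* Given the antipodal points sorted increasingly in [0,1), the arcs between
   cyclically consecutive antipodal points, as (start, end) with start <= end
   (the wrap-around arc ends at (first point) + 1). *)
Definition arcs (s : list R) : list (R * R) :=
  match s with
  | [] => []
  | a :: _ => consec s ++ [(last s 0, a + 1)]
  end.

(* cost(rc(x), y) = E_{z ~ rc(x)} d(y, z): each arc's midpoint is chosen with
   probability equal to the arc length. [s] is the sorted list of antipodes. *)
Definition rc_cost_sorted (s : list R) (y : R) : R :=
  fold_right (fun ab acc => (snd ab - fst ab) * circ_dist y ((fst ab + snd ab) / 2) + acc)
             0 (arcs s).

Definition sorted_antipodes (n : nat) (x : nat -> R) (s : list R) : Prop :=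
  Sorted Rle s /\ Permutation s (antipodes n x).

(* Main.v *)
Require Import Defs.
From Stdlib Require Import Reals List Sorted Permutation.
From Stdlib Require Import Lra Lia Classical.
Import ListNotations.
Open Scope R_scope.

Ltac rabs := unfold Rabs in *; repeat match goal with
  | H : context [Rcase_abs ?a] |- _ => destruct (Rcase_abs a)
  | |- context [Rcase_abs ?a] => destruct (Rcase_abs a)
  end.

Lemma Int_part_char (w : R) (k : Z) : IZR k <= w < IZR k + 1 -> Int_part w = k.
Proof.
  intros [H1 H2]. unfold Int_part.
  assert (up w = (k+1)%Z). { symmetry. apply tech_up; rewrite plus_IZR; simpl; lra. }
  rewrite H. lia.
Qed.

Lemma frac_char w k : IZR k <= w < IZR k + 1 -> frac_part w = w - IZR k.
Proof. intros H. unfold frac_part. rewrite (Int_part_char w k H). reflexivity. Qed.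

Lemma frac_bounds w : 0 <= frac_part w < 1.
Proof. unfold frac_part. destruct (base_Int_part w). lra. Qed.

Lemma frac_decomp w : w = IZR (Int_part w) + frac_part w.
Proof. unfold frac_part. ring. Qed.

Lemma frac_shift z k : frac_part (z + IZR k) = frac_part z.
Proof.
  destruct (base_Int_part z).
  rewrite (frac_char _ (Int_part z + k)); [unfold frac_part; rewrite plus_IZR; ring|].
  rewrite plus_IZR; lra.
Qed.

Lemma round_ex w : exists j:Z, Rabs (w - IZR j) <= 1/2.
Proof.
  exists (Int_part (w + 1/2)). destruct (base_Int_part (w+1/2)) as [H1 H2].
  rabs; lra.
Qed.

Lemma IZR_zero k : -1 < IZR k < 1 -> k = 0%Z.
Proof.
  intros [H1 H2]. assert (-1 < k)%Z by (apply lt_IZR; simpl; lra).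
  assert (k < 1)%Z by (apply lt_IZR; simpl; lra). lia.
Qed.

Lemma IZR_uniq k k' : -1 < IZR k - IZR k' < 1 -> k = k'.
Proof. intros H. rewrite <- minus_IZR in H. apply IZR_zero in H. lia. Qed.

Definition G (w:R) : R := Rmin (frac_part w) (1 - frac_part w).

Lemma G_local w k : Rabs (w - IZR k) <= 1/2 -> G w = Rabs (w - IZR k).
Proof.
  intros H. unfold G. destruct (Rle_dec (IZR k) w).
  - rewrite (frac_char w k) by (rabs; lra). unfold Rmin; destruct Rle_dec; rabs; lra.
  - rewrite (frac_char w (k-1)) by (rewrite minus_IZR; simpl; rabs; lra).
    rewrite minus_IZR; simpl. unfold Rmin; destruct Rle_dec; rabs; lra.
Qed.

Lemma G_bounds w : 0 <= G w <= 1/2.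
Proof. destruct (round_ex w) as [j Hj]. rewrite (G_local w j Hj). rabs; lra. Qed.

Lemma G_shift1 w : G (w + 1) = G w.
Proof.
  destruct (round_ex w) as [j Hj]. rewrite (G_local w j Hj).
  rewrite (G_local (w+1) (j+1)); rewrite plus_IZR; simpl;
  replace (w + 1 - (IZR j + 1)) with (w - IZR j) by ring; auto.
Qed.

Definition phi t := if Rle_dec t (1/2) then t*t/2 else 1/4 - (1-t)*(1-t)/2.
Definition P w := IZR (Int_part w) / 4 + phi (frac_part w).

Lemma P_local w k : Rabs (w - IZR k) <= 1/2 ->
  P w = IZR k/4 + (w - IZR k) * Rabs (w - IZR k) / 2.
Proof.
  intros H. unfold P. destruct (Rle_dec (IZR k) w).
  - rewrite (frac_char w k) by (rabs; lra). rewrite (Int_part_char w k) by (rabs; lra).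
    unfold phi; destruct Rle_dec; rabs; try lra; field.
  - rewrite (frac_char w (k-1)) by (rewrite minus_IZR; simpl; rabs; lra).
    rewrite (Int_part_char w (k-1)) by (rewrite minus_IZR; simpl; rabs; lra).
    rewrite minus_IZR; simpl. unfold phi; destruct Rle_dec; rabs; try lra;
    try (assert (w - (IZR k - 1) = 1/2) by lra;
      replace w with (IZR k - 1/2) by lra; field); field.
Qed.

Lemma P_shift w : P w - P (w - 1) = 1/4.
Proof.
  destruct (round_ex w) as [j Hj]. rewrite (P_local w j Hj).
  rewrite (P_local (w-1) (j-1)); rewrite minus_IZR; simpl;
  replace (w - 1 - (IZR j - 1)) with (w - IZR j) by ring; auto. field.
Qed.

Definition E A B := (B - A) * G ((A+B)/2) - (P B - P A).

Lemma E_local A B k : A <= B -> Rabs (A - IZR k) <= 1/2 -> Rabs (B - IZR k) <= 1/2 ->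
  E A B = (B - A) * Rabs ((A+B)/2 - IZR k) - ((B - IZR k) * Rabs (B - IZR k) - (A - IZR k) * Rabs (A - IZR k))/2.
Proof.
  intros H0 H1 H2. unfold E. rewrite (G_local _ k) by (rabs; lra).
  rewrite (P_local A k H1), (P_local B k H2). field.
Qed.

Lemma Lint A B j : A < IZR j < B -> B - A <= 1/2 ->
  E A B = - (Rmin (G A) (G B))^2.
Proof.
  intros H H'. rewrite (E_local A B j) by (rabs; lra).
  rewrite (G_local A j), (G_local B j) by (rabs; lra).
  unfold Rmin; destruct Rle_dec; rabs; try lra; nra.
Qed.

Lemma Lnoint A B : 0 <= B - A <= 1/2 -> (forall j, ~ (A < IZR j < B)) -> 0 <= E A B.
Proof.
  intros H Hn. destruct (round_ex ((A+B)/2)) as [k Hk].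
  assert (Hk' := Hn k).
  destruct (Rlt_dec A (IZR k - 1/2)).
  - unfold E. rewrite (G_local _ k Hk).
    rewrite (P_local A (k-1)) by (rewrite minus_IZR; simpl; rabs; lra).
    rewrite (P_local B k) by (rabs; lra).
    rewrite minus_IZR; simpl. rabs; try lra; nra.
  - destruct (Rlt_dec (IZR k + 1/2) B).
    + unfold E. rewrite (G_local _ k Hk).
      rewrite (P_local B (k+1)) by (rewrite plus_IZR; simpl; rabs; lra).
      rewrite (P_local A k) by (rabs; lra).
      rewrite plus_IZR; simpl. rabs; try lra; nra.
    + rewrite (E_local A B k) by (rabs; lra). rabs; try lra; nra.
Qed.

Lemma Lnohalf A B : 0 <= B - A <= 1/2 -> (forall j, ~ (A < IZR j + 1/2 < B)) -> E A B <= 0.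
Proof.
  intros H Hn. destruct (round_ex ((A+B)/2)) as [k Hk].
  destruct (Rlt_dec A (IZR k - 1/2)).
  - exfalso. apply (Hn (k-1)%Z). rewrite minus_IZR; simpl. rabs; lra.
  - destruct (Rlt_dec (IZR k + 1/2) B).
    + exfalso. apply (Hn k). rabs; lra.
    + rewrite (E_local A B k) by (rabs; lra). rabs; try lra; nra.
Qed.

Definition sumL (f : R*R -> R) (l : list (R*R)) : R :=
  fold_right (fun ab acc => f ab + acc) 0 l.

Lemma sumL_cons f a l : sumL f (a::l) = f a + sumL f l.
Proof. reflexivity. Qed.

Lemma sumL_app f l1 l2 : sumL f (l1 ++ l2) = sumL f l1 + sumL f l2.
Proof. induction l1; simpl; [ring| rewrite IHl1; ring]. Qed.

Lemma sumL_plus f g l : sumL (fun p => f p + g p) l = sumL f l + sumL g l.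
Proof. induction l; simpl; [ring| rewrite IHl; ring]. Qed.

Lemma sumL_ext f g l : (forall p, In p l -> f p = g p) -> sumL f l = sumL g l.
Proof. induction l; simpl; intros H; auto. rewrite H, IHl; auto. Qed.

Lemma sumL_nonneg f l : (forall p, In p l -> 0 <= f p) -> 0 <= sumL f l.
Proof. induction l; simpl; intros H; [lra|]. pose proof (H a (or_introl eq_refl)).
  assert (0 <= sumL f l) by (apply IHl; auto). lra. Qed.

Lemma sumL_le_one f l a : (forall p, In p l -> f p <= 0) -> In a l -> sumL f l <= f a.
Proof.
  induction l as [|c l IHl]; simpl; intros H Ha; [contradiction|].
  destruct Ha as [<-|Ha].
  - assert (sumL f l <= 0). { assert (forall p, In p l -> f p <= 0) by auto.
      clear -H0. induction l; simpl in *; [lra|].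
      pose proof (H0 a (or_introl eq_refl)). assert (sumL f l <= 0) by auto. lra. } lra.
  - pose proof (H c (or_introl eq_refl)). assert (sumL f l <= f a) by (apply IHl; auto). lra.
Qed.

Lemma consec_tele (Q : R -> R) a l :
  sumL (fun p => Q (fst p) - Q (snd p)) (consec (a::l)) = Q a - Q (last (a::l) 0).
Proof.
  revert a; induction l as [|b l IH]; intros a; simpl; [ring|].
  specialize (IH b). simpl in IH. rewrite IH. destruct l; simpl; ring.
Qed.

Lemma ss_of (l : list R) : Sorted Rle l -> StronglySorted Rle l.
Proof. apply Sorted_StronglySorted. intros x y z; apply Rle_trans. Qed.

Lemma ss_head a l : Sorted Rle (a::l) -> forall q, In q (a::l) -> a <= q.
Proof.
  intros H q Hq. apply ss_of in H. inversion H; subst.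
  destruct Hq as [<-|Hq]; [lra|]. rewrite Forall_forall in H3. auto.
Qed.

Lemma last_in (a : R) l : In (last (a::l) 0) (a::l).
Proof.
  revert a; induction l as [|b l IH]; intros a; simpl; [auto|].
  right. specialize (IH b). simpl in IH. destruct l; auto.
Qed.

Lemma last_max l : Sorted Rle l -> forall q, In q l -> q <= last l 0.
Proof.
  induction l as [|a l IH]; intros H q Hq; [contradiction|].
  destruct l as [|b l].
  - destruct Hq as [<-|[]]; simpl; lra.
  - change (last (a::b::l) 0) with (last (b::l) 0).
    assert (Sorted Rle (b::l)) by (inversion H; auto).
    destruct Hq as [<-|Hq]; [|apply IH; auto].
    apply Rle_trans with b; [|apply IH; simpl; auto].
    apply (ss_head a (b::l)); simpl; auto.
Qed.

Lemma consec_props l : Sorted Rle l -> forall p, In p (consec l) ->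
  In (fst p) l /\ In (snd p) l /\ fst p <= snd p /\
  (forall q, In q l -> q <= fst p \/ snd p <= q).
Proof.
  induction l as [|a l IH]; intros H p Hp; [contradiction|].
  destruct l as [|b l]; [contradiction|].
  assert (Hs : Sorted Rle (b::l)) by (inversion H; auto).
  assert (Hab : a <= b) by (apply (ss_head a (b::l::nil)%list) || (apply (ss_head a (b::l)); simpl; auto)).
  destruct Hp as [<-|Hp].
  - simpl. repeat split; auto. intros q [<-|Hq]; [left; lra|].
    right. apply (ss_head b l); [inversion H; auto|]. exact Hq.
  - destruct (IH Hs p Hp) as [H1 [H2 [H3 H4]]].
    repeat split; try (simpl; auto; fail).
    intros q [<-|Hq]; auto. left. apply Rle_trans with b; auto.
    apply (ss_head b l); auto.
Qed.

Lemma sumL_nonpos f l : (forall p, In p l -> f p <= 0) -> sumL f l <= 0.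
Proof. induction l; simpl; intros H; [lra|]. pose proof (H a (or_introl eq_refl)).
  assert (sumL f l <= 0) by (apply IHl; auto). lra. Qed.

Definition unit01 (s : list R) := forall q, In q s -> 0 <= q < 1.

Lemma arcs_props a l : Sorted Rle (a::l) -> unit01 (a::l) -> forall p, In p (arcs (a::l)) ->
  a <= fst p /\ fst p <= snd p /\ snd p <= a + 1 /\ In (fst p) (a::l) /\
  (In (snd p) (a::l) \/ In (snd p - 1) (a::l)) /\
  forall q, In q (a::l) -> forall k, ~ (fst p < q + IZR k < snd p).
Proof.
  intros Hs Hu p Hp. pose proof (Hu a (or_introl eq_refl)). unfold arcs in Hp. apply in_app_or in Hp.
  destruct Hp as [Hp|[<-|[]]].
  - destruct (consec_props _ Hs p Hp) as [H1 [H2 [H3 H4]]].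
    pose proof (Hu _ H1). pose proof (Hu _ H2). pose proof (ss_head a l Hs _ H1).
    split; [lra|]. split; [lra|]. split; [lra|]. split; [auto|]. split; [auto|].
    intros q Hq k Hk. pose proof (Hu _ Hq).
    assert (k = 0%Z) by (apply IZR_zero; lra). subst k. simpl in Hk.
    destruct (H4 q Hq); lra.
  - cbn [fst snd]. pose proof (last_in a l) as HL.
    pose proof (Hu _ HL). pose proof (ss_head a l Hs _ HL).
    split; [lra|]. split; [lra|]. split; [lra|]. split; [auto|]. split.
    + right. replace (a + 1 - 1) with a by ring. simpl; auto.
    + intros q Hq k Hk. pose proof (Hu _ Hq). pose proof (ss_head a l Hs _ Hq).
      pose proof (last_max _ Hs _ Hq).
      destruct (Z.le_gt_cases k 0) as [l0|l0].
      * apply IZR_le in l0. simpl in l0. lra.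
      * assert (Hk1 : (1 <= k)%Z) by lia. apply IZR_le in Hk1. simpl in Hk1. lra.
Qed.

Lemma consec_cover c l w : Sorted Rle (c::l) -> c <= w -> w <= last (c::l) 0 ->
  In w (c::l) \/ exists p, In p (consec (c::l)) /\ fst p < w < snd p.
Proof.
  revert c; induction l as [|b l IH]; intros c Hs H1 H2.
  - simpl in H2. left. simpl. left. lra.
  - destruct (Req_dec c w) as [<-|Hne]; [left; simpl; auto|].
    destruct (Rlt_dec w b).
    + right. exists (c,b). simpl. split; [auto|lra].
    + assert (Sorted Rle (b::l)) by (inversion Hs; auto).
      destruct (IH b H) as [H3|[p [Hp H3]]]; try lra.
      * change (last (c::b::l) 0) with (last (b::l) 0) in H2. exact H2.
      * left. simpl in *. auto.
      * right. exists p. split; [simpl; auto|auto].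
Qed.

Lemma consec_sum_ge (f : R*R -> R) w d l : Sorted Rle l -> d <= 0 ->
  (forall p, In p (consec l) -> fst p < w < snd p -> d <= f p) ->
  (forall p, In p (consec l) -> ~ (fst p < w < snd p) -> 0 <= f p) ->
  d <= sumL f (consec l) /\ (last l 0 <= w -> 0 <= sumL f (consec l)).
Proof.
  induction l as [|c l IH]; intros Hs Hd H1 H2; [simpl; lra|].
  destruct l as [|b l]; [simpl; lra|].
  assert (Hs' : Sorted Rle (b::l)) by (inversion Hs; auto).
  assert (Hcb : c <= b) by (apply (ss_head c (b::l)); simpl; auto).
  change (consec (c::b::l)) with ((c,b) :: consec (b::l)).
  change (last (c::b::l) 0) with (last (b::l) 0).
  rewrite sumL_cons.
  assert (Hrest : forall p, In p (consec (b::l)) -> b <= fst p).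
  { intros p Hp. destruct (consec_props _ Hs' p Hp) as [Hf _].
    apply (ss_head b l Hs'); auto. }
  destruct (classic (c < w < b)) as [Hin|Hout].
  - assert (d <= f (c,b)) by (apply H1; simpl; auto).
    assert (0 <= sumL f (consec (b::l))).
    { apply sumL_nonneg. intros p Hp. apply H2; [simpl; auto|].
      pose proof (Hrest p Hp). lra. }
    split; [lra|]. intros HL. pose proof (last_max _ Hs' b (or_introl eq_refl)). lra.
  - assert (0 <= f (c,b)) by (apply H2; simpl; auto).
    destruct IH as [IH1 IH2]; auto.
    + intros; apply H1; simpl; auto.
    + intros; apply H2; simpl; auto.
    + split; [lra|]. intros HL; specialize (IH2 HL); lra.
Qed.

Lemma arcs_sum_ge (f : R*R -> R) w d a l : Sorted Rle (a::l) -> d <= 0 ->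
  (forall p, In p (arcs (a::l)) -> fst p < w < snd p -> d <= f p) ->
  (forall p, In p (arcs (a::l)) -> ~ (fst p < w < snd p) -> 0 <= f p) ->
  d <= sumL f (arcs (a::l)).
Proof.
  intros Hs Hd H1 H2. unfold arcs. rewrite sumL_app, sumL_cons. simpl (sumL f []).
  destruct (consec_sum_ge f w d (a::l) Hs Hd) as [C1 C2].
  - intros; apply H1; [apply in_or_app; auto|auto].
  - intros; apply H2; [apply in_or_app; auto|auto].
  - destruct (classic (last (a::l) 0 < w < a + 1)) as [Hin|Hout].
    + assert (d <= f (last (a::l) 0, a+1)) by (apply H1; [apply in_or_app; simpl; auto|simpl; auto]).
      assert (0 <= sumL f (consec (a::l))) by (apply C2; lra). lra.
    + assert (0 <= f (last (a::l) 0, a+1)) by (apply H2; [apply in_or_app; simpl; auto|simpl; auto]).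
      lra.
Qed.

Lemma cost_decomp a l y :
  rc_cost_sorted (a::l) y = 1/4 + sumL (fun p => E (y - snd p) (y - fst p)) (arcs (a::l)).
Proof.
  change (rc_cost_sorted (a::l) y) with
    (sumL (fun ab => (snd ab - fst ab) * circ_dist y ((fst ab + snd ab)/2)) (arcs (a::l))).
  rewrite (sumL_ext _ (fun p => E (y - snd p) (y - fst p) + (P (y - fst p) - P (y - snd p)))).
  2:{ intros p _. unfold E, circ_dist, G. cbv zeta.
      replace ((y - snd p + (y - fst p)) / 2) with (y - (fst p + snd p)/2) by field. ring. }
  rewrite sumL_plus.
  unfold arcs at 2. rewrite sumL_app, sumL_cons.
  rewrite (consec_tele (fun u => P (y - u))). simpl (sumL _ []). cbn [fst snd].
  pose proof (P_shift (y - a)). replace (y - (a+1)) with (y - a - 1) by ring. lra.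
Qed.

Lemma antip_in n x j : (j < n)%nat -> In (antipode (x j)) (antipodes n x).
Proof. intros H. unfold antipodes. apply (in_map (fun j => antipode (x j))). apply in_seq. lia. Qed.

Lemma antip_inv n x q : In q (antipodes n x) -> exists j, (j < n)%nat /\ q = antipode (x j).
Proof. unfold antipodes. intros H. apply in_map_iff in H. destruct H as [j [<- Hj]].
  apply in_seq in Hj. exists j. split; [lia|auto]. Qed.

Lemma sa_unit n x s : sorted_antipodes n x s -> unit01 s.
Proof.
  intros [_ Hp] q Hq. apply (Permutation_in _ Hp) in Hq. apply antip_inv in Hq.
  destruct Hq as [j [_ ->]]. unfold antipode. apply frac_bounds.
Qed.

Lemma sa_in n x s j : sorted_antipodes n x s -> (j < n)%nat -> In (antipode (x j)) s.
Proof. intros [_ Hp] Hj. apply (Permutation_in _ (Permutation_sym Hp)). apply antip_in; auto. Qed.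

Lemma arcs_half n x a l : ~ on_one_semicircle n x -> sorted_antipodes n x (a::l) ->
  forall p, In p (arcs (a::l)) -> snd p - fst p <= 1/2.
Proof.
  intros Hno Hsa p Hp. pose proof (sa_unit _ _ _ Hsa) as Hu.
  destruct Hsa as [Hs Hperm].
  destruct (arcs_props a l Hs Hu p Hp) as [_ [_ [_ [_ [_ NI]]]]].
  destruct (Rle_dec (snd p - fst p) (1/2)) as [Hle|Hgt]; auto. exfalso.
  apply Hno. exists (snd p - 1/2). intros j Hj.
  set (q := antipode (x j)).
  assert (Hq : In q (a::l)) by (apply (sa_in n x); [split; auto|auto]).
  set (K := Int_part (x j + /2)).
  assert (Eq : x j - (snd p - 1/2) = (q - snd p) + IZR K).
  { unfold q, antipode, K, frac_part. field. }
  rewrite Eq, frac_shift.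
  pose proof (frac_bounds (q - snd p)) as Ht. pose proof (frac_decomp (q - snd p)) as Hd.
  set (t := frac_part (q - snd p)) in *. set (K2 := Int_part (q - snd p)) in *.
  specialize (NI q Hq (- K2 - 1)%Z). rewrite minus_IZR, opp_IZR in NI. simpl in NI.
  destruct (Rle_dec t (/2)) as [|Hc]; auto. exfalso. apply NI. lra.
Qed.

Definition Ey (y : R) (p : R*R) := E (y - snd p) (y - fst p).

Lemma lift_ex (a y : R) : exists K : Z, a <= y - IZR K < a + 1.
Proof. exists (Int_part (y - a)). pose proof (frac_bounds (y - a)).
  pose proof (frac_decomp (y - a)). lra. Qed.

Lemma endpoint_G a l y p : Sorted Rle (a::l) -> unit01 (a::l) -> In p (arcs (a::l)) ->
  exists q, In q (a::l) /\ G (y - snd p) = G (y - q).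
Proof.
  intros Hs Hu Hp. destruct (arcs_props a l Hs Hu p Hp) as [_ [_ [_ [_ [[H|H] _]]]]].
  - exists (snd p); auto.
  - exists (snd p - 1). split; auto. replace (y - (snd p - 1)) with ((y - snd p) + 1) by ring.
    rewrite G_shift1. reflexivity.
Qed.

Lemma key_lemma a l y K0 p : Sorted Rle (a::l) -> unit01 (a::l) -> In p (arcs (a::l)) ->
  snd p - fst p <= 1/2 -> fst p < y - IZR K0 < snd p ->
  forall q, In q (a::l) -> Rmin (G (y - snd p)) (G (y - fst p)) <= G (y - q).
Proof.
  intros Hs Hu Hp Hh Hw q Hq.
  destruct (arcs_props a l Hs Hu p Hp) as [_ [_ [_ [_ [_ NI]]]]].
  rewrite (G_local (y - snd p) K0) by (rabs; lra).
  rewrite (G_local (y - fst p) K0) by (rabs; lra).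
  destruct (round_ex (y - q)) as [j Hj]. rewrite (G_local _ j Hj).
  destruct (Rle_dec (Rmin (Rabs (y - snd p - IZR K0)) (Rabs (y - fst p - IZR K0)))
     (Rabs (y - q - IZR j))) as [H|H]; auto. exfalso.
  apply (NI q Hq (j - K0)%Z). rewrite minus_IZR.
  revert H. unfold Rmin; destruct Rle_dec; rabs; lra.
Qed.

Lemma side_sp n x a l y : ~ on_one_semicircle n x -> sorted_antipodes n x (a::l) ->
  exists d, 0 <= d /\ (forall q, In q (a::l) -> d <= G (y - q)) /\
     - d^2 <= sumL (Ey y) (arcs (a::l)).
Proof.
  intros Hno Hsa. pose proof (sa_unit _ _ _ Hsa) as Hu.
  pose proof (arcs_half _ _ _ _ Hno Hsa) as Hh. destruct Hsa as [Hs _].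
  destruct (lift_ex a y) as [K0 HK].
  assert (Hnc : forall p, In p (arcs (a::l)) -> ~ (fst p < y - IZR K0 < snd p) ->
             0 <= Ey y p).
  { intros p Hp Hn. destruct (arcs_props a l Hs Hu p Hp) as [H1 [H2 [H3 _]]].
    pose proof (Hh p Hp). unfold Ey. apply Lnoint; [lra|].
    intros j Hj. apply Hn.
    assert (j = K0) by (apply IZR_uniq; lra). subst j. lra. }
  destruct (classic (exists p, In p (arcs (a::l)) /\ fst p < y - IZR K0 < snd p))
    as [[p0 [Hp0 Hw0]]|Hno0].
  - set (d := Rmin (G (y - snd p0)) (G (y - fst p0))).
    assert (Hd : forall q, In q (a::l) -> d <= G (y - q))
      by (intros; apply (key_lemma a l y K0 p0); auto).
    exists d. split; [|split; auto].
    + unfold d, Rmin; destruct Rle_dec; apply G_bounds.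
    + apply (arcs_sum_ge _ (y - IZR K0) _ a l Hs); [nra| |auto].
      intros p Hp Hw. unfold Ey.
      pose proof (Hh p Hp).
      rewrite (Lint _ _ K0) by lra.
      assert (Hm : forall q, In q (a::l) -> Rmin (G (y - snd p)) (G (y - fst p)) <= G (y - q))
        by (intros; apply (key_lemma a l y K0 p); auto).
      destruct (endpoint_G a l y p0 Hs Hu Hp0) as [q1 [Hq1 Eq1]].
      destruct (arcs_props a l Hs Hu p0 Hp0) as [_ [_ [_ [Hq2 _]]]].
      assert (Rmin (G (y - snd p)) (G (y - fst p)) <= d).
      { unfold d. pose proof (Hm _ Hq1). pose proof (Hm _ Hq2).
        unfold Rmin at 2; destruct Rle_dec; lra. }
      assert (0 <= Rmin (G (y - snd p)) (G (y - fst p)))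
        by (unfold Rmin; destruct Rle_dec; apply G_bounds).
      nra.
  - exists 0. split; [lra|]. split.
    + intros; apply G_bounds.
    + replace (-0^2) with 0 by ring.
      apply (arcs_sum_ge _ (y - IZR K0) _ a l Hs); [lra| |auto].
      intros p Hp Hw. exfalso. apply Hno0. eauto.
Qed.

Lemma side_s n x i a l : (i < n)%nat -> ~ on_one_semicircle n x -> sorted_antipodes n x (a::l) ->
  exists q1 q2, In q1 (a::l) /\ In q2 (a::l) /\
    sumL (Ey (x i)) (arcs (a::l)) <= - (Rmin (G (x i - q1)) (G (x i - q2)))^2.
Proof.
  intros Hi Hno Hsa. set (y := x i).
  pose proof (sa_unit _ _ _ Hsa) as Hu.
  pose proof (sa_in _ _ _ i Hsa Hi) as Hpi.
  pose proof (arcs_half _ _ _ _ Hno Hsa) as Hh. destruct Hsa as [Hs _].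
  assert (Hneg : forall p, In p (arcs (a::l)) -> Ey y p <= 0).
  { intros p Hp. destruct (arcs_props a l Hs Hu p Hp) as [_ [H3 [_ [_ [_ NI]]]]].
    pose proof (Hh p Hp). unfold Ey. apply Lnohalf; [lra|].
    intros j Hj. set (K := Int_part (y + /2)).
    apply (NI _ Hpi (K - j - 1)%Z). rewrite !minus_IZR. simpl.
    unfold antipode, frac_part. fold y. fold K. lra. }
  destruct (lift_ex a y) as [K0 HK]. set (w := y - IZR K0) in *.
  assert (Hcov : In w (a::l) \/ exists p, In p (arcs (a::l)) /\ fst p < w < snd p).
  { pose proof (last_in a l) as HL. pose proof (Hu _ HL) as HL2.
    destruct (Rle_dec w (last (a::l) 0)).
    - destruct (consec_cover a l w Hs) as [Hc|[p [Hp Hc]]]; try lra; auto.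
      right. exists p. split; auto. unfold arcs. apply in_or_app; auto.
    - destruct (Req_dec w (last (a::l) 0)) as [Heq|Hne]; [lra|].
      right. exists (last (a::l) 0, a + 1). split; [unfold arcs; apply in_or_app; simpl; auto|].
      cbn [fst snd]. lra. }
  destruct Hcov as [Hw|[p [Hp Hw]]].
  - exists w, w. split; auto. split; auto.
    assert (G (y - w) = 0) by (rewrite (G_local _ K0); unfold w; rabs; lra).
    rewrite H. unfold Rmin; destruct Rle_dec; replace (-0^2) with 0 by ring; apply sumL_nonpos; auto.
  - destruct (endpoint_G a l y p Hs Hu Hp) as [q1 [Hq1 Eq1]].
    destruct (arcs_props a l Hs Hu p Hp) as [_ [_ [_ [Hq2 _]]]].
    exists q1, (fst p). split; auto. split; auto. fold y. rewrite <- Eq1.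
    pose proof (Hh p Hp).
    eapply Rle_trans; [apply (sumL_le_one _ _ p); auto|].
    unfold Ey. rewrite (Lint _ _ K0) by (unfold w in Hw; lra). lra.
Qed.

Theorem mainTheorem17 (n : nat) (x : nat -> R) (i : nat) (xi' : R)
  (s s' : list R) :
  (i < n)%nat ->
  ~ on_one_semicircle n x ->
  ~ on_one_semicircle n (update x i xi') ->
  sorted_antipodes n x s ->
  sorted_antipodes n (update x i xi') s' ->
  rc_cost_sorted s (x i) <= rc_cost_sorted s' (x i).
Proof.
  intros Hi Hno Hno' Hsa Hsa'.
  destruct s as [|a l]; [pose proof (sa_in _ _ _ i Hsa Hi) as Hc; destruct Hc|].
  destruct s' as [|a' l']; [pose proof (sa_in _ _ _ i Hsa' Hi) as Hc; destruct Hc|].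
  rewrite !cost_decomp.
  destruct (side_s n x i a l Hi Hno Hsa) as [q1 [q2 [Hq1 [Hq2 S1]]]].
  destruct (side_sp n _ a' l' (x i) Hno' Hsa') as [d [Hd0 [Hd S2]]].
  assert (C3 : forall q, In q (a::l) -> d <= G (x i - q)).
  { intros q Hq. destruct Hsa as [_ Hp]. apply (Permutation_in _ Hp) in Hq.
    apply antip_inv in Hq. destruct Hq as [j [Hj ->]].
    destruct (Nat.eq_dec j i) as [->|Hne].
    - assert (G (x i - antipode (x i)) = 1/2).
      { rewrite (G_local _ (Int_part (x i + /2))); unfold antipode, frac_part; rabs; lra. }
      rewrite H. pose proof (Hd a' (or_introl eq_refl)). pose proof (G_bounds (x i - a')). lra.
    - apply Hd. replace (x j) with (update x i xi' j).
      + apply (sa_in _ _ _ j Hsa' Hj).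
      + unfold update. destruct (Nat.eqb_spec j i); [contradiction|auto]. }
  pose proof (C3 _ Hq1). pose proof (C3 _ Hq2).
  assert (d <= Rmin (G (x i - q1)) (G (x i - q2))) by (unfold Rmin; destruct Rle_dec; lra).
  unfold Ey in *. nra.
Qed.
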